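(* Let $k=2\kappa+1$ with $\kappa\in\{0,1,2,\dots\}$, and let $$\psi(x)=\frac{1}{k!}\,\frac{1}{x(1-x)}\,\frac{d^{k-1}}{dx^{k-1}}\Big[x^{k+1}(1-x)^k\Big],\qquad x\in[0,1]$$ (a polynomial of degree $k$). Then (i) $\int_0^1\psi(x)^2\,dx=\frac{1}{k(k+2)}$; (ii) $\int_0^1\psi(x)\psi(1-x)\,dx=\frac{1}{k(k+1)(k+2)}$; (iii) $\int_0^1 x^j\psi(x)\,dx=\frac{1}{k(k+2)}$ for $j=1,2,\dots,k$; (iv) $\int_0^1\psi(x)\,dx=\frac{1}{k(k+1)}$; (v) $\int_0^1(1-x)^j\psi(x)\,dx=\frac{1}{k(k+1)(k+2)}$ for $j=1,2,\dots,k$; (vi) $\psi'(0)=\frac{k+1}{2}$ and $\psi'(1)=\frac{k^2+2k-1}{2}$; (vii) $\int_0^1\psi'(x)\psi(1-x)\,dx=\frac{1}{k+1}$.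
   Context: The expression defining $\psi$ is understood as the polynomial obtained after cancelling the factor $x(1-x)$ (for $k=1$ this gives $\psi(x)=x$). *)

(* Defs.v *)
From HB Require Import structures.
From mathcomp Require Import all_boot all_order all_algebra.
From mathcomp Require Import all_classical all_reals all_analysis.
Set Implicit Arguments. Unset Strict Implicit. Unset Printing Implicit Defensive.
Import Order.TTheory GRing.Theory Num.Theory.
Local Open Scope ring_scope.

(* psi_k(x) = 1/k! * 1/(x(1-x)) * d^{k-1}/dx^{k-1} [ x^{k+1} (1-x)^k ],
   as the polynomial obtained after cancelling the factor x(1-x)
   (exact polynomial division by 'X * (1 - 'X)). *)
Definition psi_poly (R : fieldType) (k : nat) : {poly R} :=
  (k`!%:R)^-1 *: ((('X ^+ k.+1 * (1 - 'X) ^+ k)^`(k.-1)) %/ ('X * (1 - 'X))).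

(* Main.v *)
Require Import Defs.
From HB Require Import structures.
From mathcomp Require Import all_boot all_order all_algebra.
From mathcomp Require Import all_classical all_reals all_analysis.
From mathcomp Require Import ring lra zify.
Import Order.TTheory GRing.Theory Num.Theory.
Set Implicit Arguments. Unset Strict Implicit.
Local Open Scope ring_scope.

Lemma int_poly_FTC (R : realType) (p P : {poly R}) : P^`() = p ->
  (\int[lebesgue_measure]_(x in `[0%R, 1%R]) (p.[x])%:E = (P.[1] - P.[0])%:E)%E.
Proof.
move=> hP.
rewrite (@continuous_FTC2 R (horner p) (horner P) 0 1) ?ltr01 //.
- by apply: continuous_subspace_itv => x _; exact: continuous_horner.
- split.
  + by move=> x _; exact: derivable_horner.
  + by apply: cvg_at_right_filter; exact: continuous_horner.
  + by apply: cvg_at_left_filter; exact: continuous_horner.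
- by move=> x _; rewrite -derivE hP.
Qed.

Section PolyInt.
Variable R : realType.
Implicit Types p q P : {poly R}.

Definition prim p : {poly R} := \poly_(i < (size p).+1) (p`_i.-1 / i%:R).
Definition Ip p : R := (prim p).[1] - (prim p).[0].

Lemma coef_prim p i : (prim p)`_i = p`_i.-1 / i%:R.
Proof.
rewrite coef_poly; case: ltnP => // h.
by rewrite nth_default ?mul0r //; case: i h => //= i; rewrite ltnS.
Qed.

Lemma prim_deriv p : (prim p)^`() = p.
Proof.
apply/polyP => i; rewrite coef_deriv coef_prim /= -(mulr_natr (p`_i / _)) mulfVK // pnatr_eq0.
Qed.

Lemma deriv_eq0_const p : p^`() = 0 -> p = (p`_0)%:P.
Proof.
move=> h; apply/polyP => -[|i]; first by rewrite coefC.
rewrite coefC /=; have := congr1 (fun q => q`_i) h.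
rewrite coef_deriv coef0 => /eqP; rewrite -mulr_natr mulf_eq0 pnatr_eq0 /=.
by rewrite orbF => /eqP.
Qed.

Lemma Ip_FTC p P : P^`() = p -> Ip p = P.[1] - P.[0].
Proof.
move=> hP; set D := prim p - P.
have hD : D^`() = 0 by rewrite derivB prim_deriv hP subrr.
rewrite /Ip; have := @deriv_eq0_const D hD; rewrite /D => /eqP; rewrite subr_eq => /eqP ->.
by rewrite !hornerD !hornerC; ring.
Qed.

Lemma Ip_deriv P : Ip (P^`()) = P.[1] - P.[0].
Proof. exact: Ip_FTC. Qed.

Lemma IpD p q : Ip (p + q) = Ip p + Ip q.
Proof.
rewrite (@Ip_FTC _ (prim p + prim q)) ?derivD ?prim_deriv //.
by rewrite /Ip !hornerD; ring.
Qed.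

Lemma IpZ c p : Ip (c *: p) = c * Ip p.
Proof.
rewrite (@Ip_FTC _ (c *: prim p)) ?derivZ ?prim_deriv //.
by rewrite /Ip !hornerZ; ring.
Qed.

Lemma IpN p : Ip (- p) = - Ip p.
Proof. by rewrite -scaleN1r IpZ mulN1r. Qed.

Lemma IpB p q : Ip (p - q) = Ip p - Ip q.
Proof. by rewrite IpD IpN. Qed.

Lemma Ip_byparts p q : Ip (p * q^`()) = (p * q).[1] - (p * q).[0] - Ip (p^`() * q).
Proof.
have := Ip_deriv (p * q); rewrite derivM IpD => <-; ring.
Qed.

Lemma deriv1mX : (1 - 'X : {poly R})^`() = -1.
Proof. by rewrite derivB -polyC1 derivC derivX sub0r. Qed.

Lemma Ip_comp p : Ip (p \Po (1 - 'X)) = Ip p.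
Proof.
rewrite (@Ip_FTC _ (- (prim p \Po (1 - 'X)))); last first.
  by rewrite derivN deriv_comp prim_deriv deriv1mX mulrN1 opprK.
rewrite /Ip !hornerN !horner_comp !hornerE subr0 subrr; ring.
Qed.

Lemma Ip_Xn m : Ip ('X^m) = 1 / (m.+1)%:R.
Proof.
rewrite (@Ip_FTC _ (((m.+1)%:R^-1 : R) *: 'X^(m.+1))); last first.
  by rewrite derivZ derivXn /= -scalerMnr scalerMnl -[(_ ^-1) *+ _]mulr_natr mulVf ?scale1r // pnatr_eq0.
by rewrite !hornerZ !hornerXn expr1n expr0n /= mulr0 subr0 mulr1 div1r.
Qed.

Lemma Ip_1mXn m : Ip ((1 - 'X)^+m) = 1 / (m.+1)%:R.
Proof. by rewrite -comp_Xn_poly Ip_comp Ip_Xn. Qed.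


Lemma derivn_at0 p i : (p^`(i)).[0] = p`_i * i`!%:R.
Proof. by rewrite horner_coef0 coef_derivn addn0 ffactnn mulr_natr. Qed.

Lemma derivn_comp1 p i :
  (p \Po (1 - 'X))^`(i) = (-1)^+i *: (p^`(i) \Po (1 - 'X)).
Proof.
elim: i => [|i IH]; first by rewrite !derivn0 expr0 scale1r.
by rewrite !derivnS IH derivZ deriv_comp deriv1mX mulrN1 scalerN -scaleN1r scalerA exprS.
Qed.

Lemma comp_invol p : (p \Po (1 - 'X)) \Po (1 - 'X) = p.
Proof.
rewrite -comp_polyA comp_polyB comp_polyX -polyC1 comp_polyC.
by rewrite opprB addrC subrK comp_polyXr.
Qed.

Lemma sign_sq i : (-1) ^+ i * (-1) ^+ i = 1 :> R.
Proof. by rewrite -exprMn mulrNN mulr1 expr1n. Qed.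

Lemma derivn_at1 p i :
  (p^`(i)).[1] = (-1)^+i * ((p \Po (1 - 'X))`_i * i`!%:R).
Proof.
rewrite -derivn_at0 derivn_comp1 hornerZ horner_comp !hornerE subr0.
by rewrite /= sign_sq mul1r.
Qed.

Lemma coef0_1mXn m : ((1 - 'X)^+m : {poly R})`_0 = 1.
Proof. by rewrite -horner_coef0 !hornerE subr0 expr1n. Qed.

Lemma coef1_1mXn m : ((1 - 'X)^+m : {poly R})`_1 = - m%:R.
Proof.
elim: m => [|m IH]; first by rewrite expr0 coef1 oppr0.
rewrite exprS mulrBl mul1r coefB mulrC coefMX /= IH coef0_1mXn.
by rewrite mulrS; ring.
Qed.

Lemma size_derivn_leq p m : (size (p^`(m)) <= size p - m)%N.
Proof.
apply/leq_sizeP => j hj; rewrite coef_derivn nth_default ?mul0rn //.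
by move: hj; rewrite leq_subLR addnC.
Qed.

Lemma size_1mX : size (1 - 'X : {poly R}) = 2%N.
Proof. by rewrite -opprB size_polyN -polyC1 size_XsubC. Qed.

Lemma size_comp1 p : size (p \Po (1 - 'X)) = size p.
Proof. exact: size_comp_poly2 size_1mX. Qed.

Lemma size_1mXn m : size ((1 - 'X)^+m : {poly R}) = m.+1.
Proof. by rewrite -comp_Xn_poly size_comp1 size_polyXn. Qed.

Lemma root01 p : p.[0] = 0 -> p.[1] = 0 ->
  exists q, p = q * ('X * (1 - 'X)) /\ (size q <= (size p).-2)%N.
Proof.
move=> h0 h1.
have /factor_theorem [q1 hq1] : root p 0 by rewrite rootE h0.
have : root q1 1.
  by rewrite rootE; move: h1; rewrite hq1 !hornerE subr0 mulr1 => ->.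
move=> /factor_theorem [q2 hq2].
exists (- q2); split; first by rewrite hq1 hq2 -polyC1; ring.
have [->|q2n0] := eqVneq q2 0; first by rewrite oppr0 size_poly0.
rewrite size_polyN hq1 hq2 size_Mmonic ?monicXsubC //; last first.
  by rewrite mulf_neq0 // polyXsubC_eq0.
by rewrite size_Mmonic ?monicXsubC // !size_XsubC !addn2.
Qed.

Lemma dvd_deriv p m : 'X^(m.+1) %| p -> 'X^m %| p^`().
Proof.
move=> /dvdpP [s ->]; rewrite derivM derivXn /=.
apply/dvdpP; exists (s^`() * 'X + s *+ m.+1).
by rewrite mulrDl -mulrA -exprS mulrnAl mulrnAr.
Qed.

Lemma dvd_derivn p a i : 'X^a %| p -> 'X^(a - i) %| p^`(i).
Proof.
move=> h; elim: i => [|i IH]; first by rewrite subn0 derivn0.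
rewrite derivnS; case E: (a - i)%N IH => [|m] IH.
  have -> : (a - i.+1 = 0)%N by lia.
  by rewrite expr0 dvd1p.
have -> : (a - i.+1 = m)%N by lia.
exact: dvd_deriv.
Qed.

Lemma byparts_n F m : (forall i, (i < m)%N -> (F^`(i)).[0] = 0 /\ (F^`(i)).[1] = 0) ->
  forall q, Ip (q * F^`(m)) = (-1)^+m * Ip (q^`(m) * F).
Proof.
elim: m => [|m IH] hF q; first by rewrite !derivn0 expr0 mul1r.
rewrite derivnS Ip_byparts !hornerM.
have [-> ->] := hF m (ltnSn m).
rewrite IH; last by move=> i hi; apply: hF; apply: ltnW.
by rewrite -derivSn exprS !mulr0 subrr sub0r mulN1r mulNr.
Qed.


Lemma Ip0 : Ip 0 = 0.
Proof. by rewrite -(scale0r (0 : {poly R})) IpZ mul0r. Qed.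

Lemma comp1_pow p m : (p ^+ m) \Po (1 - 'X) = (p \Po (1 - 'X)) ^+ m.
Proof.
elim: m => [|m IH]; first by rewrite !expr0 -polyC1 comp_polyC.
by rewrite !exprS comp_polyM IH.
Qed.

Lemma chain_step H i j : 'X^(j.+1) %| H^`(i) -> 'X^j %| H^`(i.+1) ->
  (H^`(i)).[1] = 0 ->
  Ip (H^`(i.+1) %/ 'X^j) = j%:R * Ip (H^`(i) %/ 'X^(j.+1)).
Proof.
move=> d1 d2 v1; set Rr := H^`(i) %/ 'X^(j.+1).
have h1 : Rr * 'X^(j.+1) = H^`(i) by rewrite divpK.
have h2 : (H^`(i.+1) %/ 'X^j) * 'X^j = H^`(i.+1) by rewrite divpK.
have Xn0 : ('X^j : {poly R}) != 0 by rewrite expf_neq0 // polyX_eq0.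
have -> : H^`(i.+1) %/ 'X^j = j%:R *: Rr + ('X * Rr)^`().
  apply: (mulIf Xn0); rewrite h2 derivnS -h1 !derivM derivXn derivX /=.
  rewrite scaler_nat exprS; ring.
rewrite IpD IpZ Ip_deriv !hornerM !hornerX mul0r subr0 mul1r.
have : (Rr * 'X^(j.+1)).[1] = 0 by rewrite h1.
by rewrite hornerM hornerXn expr1n mulr1 => ->; rewrite addr0.
Qed.


Lemma chain H N : (forall i j, (i + j <= N.+1)%N -> 'X^j %| H^`(i)) ->
  (forall i, (i < N)%N -> (H^`(i)).[1] = 0) ->
  forall i j, (i + j.+1 <= N.+1)%N ->
  Ip (H^`(i) %/ 'X^(j.+1)) * j`!%:R = (i+j)`!%:R * Ip (H %/ 'X^((i+j).+1)).
Proof.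
move=> hd hv; elim=> [|i IH] j hij; first by rewrite add0n derivn0 mulrC.
rewrite chain_step; [| apply: hd; lia | apply: hd; lia | apply: hv; lia].
have e : (i.+1 + j = i + j.+1)%N by lia.
rewrite e -(IH j.+1); last by lia.
rewrite factS natrM; ring.
Qed.

Lemma chain_full H N : (forall i j, (i + j <= N.+1)%N -> 'X^j %| H^`(i)) ->
  (forall i, (i < N)%N -> (H^`(i)).[1] = 0) ->
  Ip (H^`(N) %/ 'X) = N`!%:R * Ip (H %/ 'X^(N.+1)).
Proof.
move=> hd hv; have := @chain H N hd hv N 0; rewrite addn1 => /(_ (leqnn _)).
by rewrite addn0 fact0 mulr1 expr1 => ->.
Qed.

Lemma int_poly p :
  (\int[lebesgue_measure]_(x in `[0%R, 1%R]) (p.[x])%:E = (Ip p)%:E)%E.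
Proof. by rewrite (@int_poly_FTC R p (prim p)) ?prim_deriv. Qed.

End PolyInt.

Section Psi.
Variable R : realType.
Variable n : nat.
Hypothesis hn : (-1 : R) ^+ n = 1.

Let F : {poly R} := 'X^(n.+2) * (1 - 'X)^+(n.+1).
Let Ft : {poly R} := F \Po (1 - 'X).
Let W : {poly R} := 'X * (1 - 'X).
Let c : R := ((n.+1)`!%:R)^-1.
Let psi := psi_poly R n.+1.

Lemma Ft_eq : Ft = (1 - 'X)^+(n.+2) * 'X^(n.+1).
Proof.
have e : (1 - 'X : {poly R}) \Po (1 - 'X) = 'X.
  by rewrite comp_polyB comp_polyX -polyC1 comp_polyC polyC1 opprB addrC subrK.
by rewrite /Ft /F comp_polyM comp_Xn_poly comp1_pow e mulrC.
Qed.

Lemma hn1 : (-1 : R) ^+ n.+1 = -1.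
Proof. by rewrite exprS hn mulr1. Qed.

Lemma hn2 : (-1 : R) ^+ n.+2 = 1.
Proof. by rewrite exprS hn1 mulrNN mulr1. Qed.

Lemma F0 i : (i <= n.+1)%N -> (F^`(i)).[0] = 0.
Proof. by move=> hi; rewrite derivn_at0 /F coefXnM ifT ?mul0r. Qed.

Lemma F0top : (F^`(n.+2)).[0] = (n.+2)`!%:R.
Proof. by rewrite derivn_at0 /F coefXnM ltnn subnn coef0_1mXn mul1r. Qed.

Lemma F1 i : (i <= n)%N -> (F^`(i)).[1] = 0.
Proof.
by move=> hi; rewrite derivn_at1 -/Ft Ft_eq coefMXn ifT ?mul0r ?mulr0.
Qed.

Lemma F1a : (F^`(n.+1)).[1] = - (n.+1)`!%:R.
Proof.
by rewrite derivn_at1 -/Ft Ft_eq coefMXn ltnn subnn coef0_1mXn mul1r hn1 mulN1r.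
Qed.

Lemma F1b : (F^`(n.+2)).[1] = - ((n.+2)%:R * (n.+2)`!%:R).
Proof.
rewrite derivn_at1 -/Ft Ft_eq coefMXn ltnNge leqnSn /= hn2 mul1r.
by rewrite (_ : (n.+2 - n.+1 = 1)%N) ?coef1_1mXn ?mulNr // subSS subSn // subnn.
Qed.

Lemma W_neq0 : W != 0.
Proof. by rewrite mulf_neq0 ?polyX_eq0 // -size_poly_eq0 size_1mX. Qed.

Lemma psi_facts : exists q, psi = c *: q /\ F^`(n) = q * W /\ (size q <= n.+2)%N.
Proof.
have [q [hq sq]] := @root01 R _ (@F0 n (leqnSn n)) (@F1 n (leqnn n)).
exists q; split; last split => //.
  by rewrite /psi /psi_poly /= -/F -/W hq mulpK ?W_neq0.
apply: (leq_trans sq).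
have sF : (size F <= (n.+3 + n.+2).-1)%N.
  by rewrite /F -(size_polyXn R n.+2) -(size_1mXn R n.+1) size_mul_leq.
have := @size_derivn_leq R F n; lia.
Qed.

Lemma psiW : psi * W = c *: F^`(n).
Proof.
by have [q [-> [-> _]]] := psi_facts; rewrite scalerAl.
Qed.

Lemma size_psi : (size psi <= n.+2)%N.
Proof.
have [q [-> [_ sq]]] := psi_facts; exact: leq_trans (size_scale_leq _ _) sq.
Qed.


Lemma orth (q : {poly R}) : (size q <= n)%N -> Ip (q * (psi * W)) = 0.
Proof.
move=> sq; rewrite psiW -scalerAr IpZ (@byparts_n R F n).
  by rewrite derivn_poly0 // mul0r Ip0 !mulr0.
move=> i hi; split; [apply: F0 | apply: F1]; lia.
Qed.

Definition Acst := Ip ((1 - 'X) * psi).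
Definition Bcst := Ip ('X * psi).

Lemma lemL (r : {poly R}) : (size r <= n.+2)%N -> Ip (r * psi) = r.[0] * Acst + r.[1] * Bcst.
Proof.
move=> sr; set s := r - (r.[0] *: (1 - 'X) + r.[1] *: 'X).
have s0 : s.[0] = 0 by rewrite /s !hornerE; ring.
have s1 : s.[1] = 0 by rewrite /s !hornerE; ring.
have ss : (size s <= n.+2)%N.
  apply/leq_sizeP => j hj; rewrite /s coefB coefD !coefZ coefB coefX coef1.
  rewrite (leq_sizeP _ _ sr) //.
  have -> : (j == 1%N) = false by apply/eqP; lia.
  have -> : (j == 0%N) = false by apply/eqP; lia.
  by rewrite subrr !mulr0 !addr0 subrr.
have [q [hq sq]] := @root01 R s s0 s1.
have -> : r * psi = r.[0] *: ((1 - 'X) * psi) + r.[1] *: ('X * psi) + q * (psi * W).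
  have hr : r = s + (r.[0] *: (1 - 'X) + r.[1] *: 'X) by rewrite /s subrK.
  by rewrite {1}hr hq /W -!mul_polyC; ring.
rewrite !IpD !IpZ orth ?addr0 //; lia.
Qed.


Lemma X_neq0 : ('X : {poly R}) != 0.
Proof. by rewrite polyX_eq0. Qed.

Lemma A_val : Acst = c * n`!%:R * (1 / (n.+2)%:R - 1 / (n.+3)%:R).
Proof.
have hd : forall i j, (i + j <= n.+1)%N -> 'X^j %| F^`(i).
  move=> i j hij; apply: (@dvdp_trans _ ('X^(n.+2 - i))).
    by apply: dvdp_exp2l; lia.
  by apply: dvd_derivn; rewrite /F dvdp_mulIl.
have hv : forall i, (i < n)%N -> (F^`(i)).[1] = 0 by move=> i hi; apply: F1; lia.
have hc := chain_full hd hv.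
have e1 : (1 - 'X) * psi = c *: (F^`(n) %/ 'X).
  apply: (mulIf X_neq0); rewrite -scalerAl divpK; last first.
    by have := hd n 1%N; rewrite expr1 => ->; lia.
  by rewrite -psiW /W; ring.
have e2 : F %/ 'X^(n.+1) = 'X * (1 - 'X)^+(n.+1).
  rewrite /F (_ : 'X^(n.+2) * _ = ('X * (1 - 'X)^+(n.+1)) * 'X^(n.+1)).
    by rewrite mulpK // expf_neq0 // X_neq0.
  by rewrite exprS; ring.
rewrite /Acst e1 IpZ hc e2.
have -> : ('X * (1 - 'X)^+(n.+1) : {poly R}) = (1 - 'X)^+(n.+1) - (1 - 'X)^+(n.+2).
  by rewrite (exprS _ n.+1); ring.
by rewrite IpB !Ip_1mXn mulrA.
Qed.

Lemma B_val : Bcst = c * n`!%:R * (1 / (n.+3)%:R).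
Proof.
have e : (1 - 'X : {poly R}) \Po (1 - 'X) = 'X.
  by rewrite comp_polyB comp_polyX -polyC1 comp_polyC polyC1 opprB addrC subrK.
have hd : forall i j, (i + j <= n.+1)%N -> 'X^j %| Ft^`(i).
  move=> i j hij; apply: (@dvdp_trans _ ('X^(n.+1 - i))).
    by apply: dvdp_exp2l; lia.
  by apply: dvd_derivn; rewrite Ft_eq dvdp_mull.
have hv : forall i, (i < n)%N -> (Ft^`(i)).[1] = 0.
  by move=> i hi; rewrite derivn_at1 /Ft comp_invol /F coefXnM ifT ?mul0r ?mulr0 //; lia.
have hc := chain_full hd hv.
have eFt : Ft^`(n) = F^`(n) \Po (1 - 'X) by rewrite /Ft derivn_comp1 hn scale1r.
have e1 : (1 - 'X) * (psi \Po (1 - 'X)) = c *: (Ft^`(n) %/ 'X).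
  apply: (mulIf X_neq0); rewrite -scalerAl divpK; last first.
    by have := hd n 1%N; rewrite expr1 => ->; lia.
  rewrite eFt -comp_polyZ -psiW comp_polyM /W comp_polyM comp_polyX e; ring.
have e2 : Ft %/ 'X^(n.+1) = (1 - 'X)^+(n.+2) by rewrite Ft_eq mulpK // expf_neq0 // X_neq0.
rewrite /Bcst -Ip_comp comp_polyM comp_polyX e1 IpZ hc e2 Ip_1mXn.
by rewrite mulrA.
Qed.


Lemma c_fact : c * (n.+1)`!%:R = 1.
Proof. by rewrite /c mulVf // pnatr_eq0 -lt0n fact_gt0. Qed.

Lemma psi_vals : psi.[0] = 0 /\ psi.[1] = 1 /\
  psi^`().[0] = (n.+2)%:R / 2 /\ psi^`().[1] = ((n.+2)%:R ^+ 2 - 2) / 2.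
Proof.
have u1 : (psi * W)^`() = c *: F^`(n.+1) by rewrite psiW derivZ derivnS.
have u2 : (psi * W)^`()^`() = c *: F^`(n.+2) by rewrite u1 derivZ (derivnS _ n.+1).
have dW : W^`() = 1 - 2%:R *: 'X.
  by rewrite /W derivM derivX deriv1mX mul1r mulrN1 scaler_nat; ring.
have ddW : W^`()^`() = - 2%:R.
  by rewrite dW derivB -polyC1 derivC derivZ derivX sub0r alg_polyC polyC_natr.
have eW0 : W.[0] = 0 by rewrite /W !hornerE; ring.
have eW1 : W.[1] = 0 by rewrite /W !hornerE; ring.
have eW'0 : W^`().[0] = 1 by rewrite dW !hornerE; ring.
have eW'1 : W^`().[1] = -1 by rewrite dW !hornerE; ring.
have eW'' : forall x, W^`()^`().[x] = -2 by move=> x; rewrite ddW !hornerE.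
have D1 : forall x, ((psi * W)^`()).[x] = psi^`().[x] * W.[x] + psi.[x] * W^`().[x].
  by move=> x; rewrite (derivM psi W) hornerD !hornerM.
have D2 : forall x, ((psi * W)^`()^`()).[x] =
    psi^`()^`().[x] * W.[x] + 2 * (psi^`().[x] * W^`().[x]) + psi.[x] * W^`()^`().[x].
  move=> x; rewrite (derivM psi W) derivD (derivM psi^`() W) (derivM psi W^`()).
  by rewrite !hornerD !hornerM; ring.
have h1 : psi^`().[0] * W.[0] + psi.[0] * W^`().[0] = c * F^`(n.+1).[0].
  by rewrite -D1 u1 hornerZ.
have h2 : psi^`().[1] * W.[1] + psi.[1] * W^`().[1] = c * F^`(n.+1).[1].
  by rewrite -D1 u1 hornerZ.
have h3 : psi^`()^`().[0] * W.[0] + 2 * (psi^`().[0] * W^`().[0]) + psi.[0] * W^`()^`().[0]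
   = c * F^`(n.+2).[0] by rewrite -D2 u2 hornerZ.
have h4 : psi^`()^`().[1] * W.[1] + 2 * (psi^`().[1] * W^`().[1]) + psi.[1] * W^`()^`().[1]
   = c * F^`(n.+2).[1] by rewrite -D2 u2 hornerZ.
have cf := c_fact.
have cf2 : c * (n.+2)`!%:R = (n.+2)%:R by rewrite factS natrM mulrCA cf mulr1.
move: h1 h2 h3 h4; rewrite eW0 eW1 eW'0 eW'1 !eW''.
have e2 : c * (- (n.+1)`!%:R) = -1 by rewrite mulrN cf.
have e3 : c * - ((n.+2)%:R * (n.+2)`!%:R) = - ((n.+2)%:R * (n.+2)%:R).
  by rewrite mulrN mulrCA cf2.
rewrite (@F0 n.+1 (leqnn _)) F1a F0top F1b e2 e3 cf2 mulr0.
move: (psi.[0]) (psi.[1]) (psi^`().[0]) (psi^`().[1]) ((n.+2)%:R : R) => a b d0 d1 N.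
move=> h1 h2 h3 h4.
have ha : a = 0 by lra.
have hb : b = 1 by lra.
split => //; split => //; split; lra.
Qed.


Lemma size_psit : (size (psi \Po (1 - 'X)) <= n.+2)%N.
Proof. by rewrite size_comp1 size_psi. Qed.

Lemma size_psi' : (size (psi^`() \Po (1 - 'X)) <= n.+2)%N.
Proof.
rewrite size_comp1; apply: leq_trans size_psi.
have [->|p0] := eqVneq psi 0; first by rewrite deriv0.
exact/ltnW/lt_size_deriv.
Qed.

Lemma omX0 : (1 - 'X : {poly R}).[0] = 1.
Proof. by rewrite !hornerE subr0. Qed.
Lemma omX1 : (1 - 'X : {poly R}).[1] = 0.
Proof. by rewrite !hornerE subrr. Qed.

Lemma cn : c * n`!%:R = 1 / (n.+1)%:R.
Proof. by rewrite /c factS natrM invfM -mulrA mulVf ?mulr1 ?div1r // pnatr_eq0 -lt0n fact_gt0. Qed.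

Lemma items :
  Ip (psi * psi) = Bcst /\
      Ip ((psi \Po (1 - 'X)) * psi) = Acst /\
      (forall j, (1 <= j <= n.+1)%N -> Ip ('X^j * psi) = Bcst) /\
      Ip psi = Acst + Bcst /\
      (forall j, (1 <= j <= n.+1)%N -> Ip ((1 - 'X)^+j * psi) = Acst) /\
      Ip ((psi \Po (1 - 'X)) * psi^`()) = psi^`().[1] * Acst + psi^`().[0] * Bcst.
Proof.
have [v0 [v1 _]] := psi_vals.
split; [|split; [|split; [|split; [|split]]]].
- by rewrite lemL ?size_psi // v0 v1 mul0r mul1r add0r.
- by rewrite lemL ?size_psit // !horner_comp omX0 omX1 v0 v1 mul0r mul1r addr0.
- move=> j /andP [j1 jn]; rewrite lemL ?size_polyXn // !hornerXn expr1n expr0n.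
  by case: j j1 jn => //= j _ _; rewrite mul0r mul1r add0r.
- by rewrite -[X in Ip X]mul1r lemL ?size_poly1 // !hornerC !mul1r.
- move=> j /andP [j1 jn]; rewrite lemL ?size_1mXn // !horner_exp omX0 omX1 expr1n expr0n.
  by case: j j1 jn => //= j _ _; rewrite mul0r mul1r addr0.
- rewrite Ip_byparts !hornerM !horner_comp omX0 omX1 v0 v1 !mulr0 !mul0r subrr sub0r.
  rewrite deriv_comp deriv1mX mulrN1 mulNr IpN opprK lemL ?size_psi' //.
  by rewrite !horner_comp omX0 omX1.
Qed.

End Psi.

Unset Implicit Arguments.
Local Open Scope classical_set_scope.
Local Open Scope ring_scope.

Ltac sidec := repeat (apply/andP; split); rewrite gt_eqF //; lra.

Theorem lemma2p2 (R : realType) (kappa : nat) :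
  let k := (2 * kappa + 1)%N in
  let psi := psi_poly R k in
  let kR : R := k%:R in
  (\int[lebesgue_measure]_(x in `[0%R, 1%R]) ((psi.[x]) ^+ 2)%:E
     = (1 / (kR * (kR + 2)))%:E)%E /\
  (\int[lebesgue_measure]_(x in `[0%R, 1%R]) (psi.[x] * psi.[1 - x])%:E
     = (1 / (kR * (kR + 1) * (kR + 2)))%:E)%E /\
  (forall j : nat, (1 <= j <= k)%N ->
    \int[lebesgue_measure]_(x in `[0%R, 1%R]) (x ^+ j * psi.[x])%:E
     = (1 / (kR * (kR + 2)))%:E)%E /\
  (\int[lebesgue_measure]_(x in `[0%R, 1%R]) (psi.[x])%:E
     = (1 / (kR * (kR + 1)))%:E)%E /\
  (forall j : nat, (1 <= j <= k)%N ->
    \int[lebesgue_measure]_(x in `[0%R, 1%R]) ((1 - x) ^+ j * psi.[x])%:E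
     = (1 / (kR * (kR + 1) * (kR + 2)))%:E)%E /\
  ((psi^`()).[0] = (kR + 1) / 2 /\
   (psi^`()).[1] = (kR ^+ 2 + 2 * kR - 1) / 2) /\
  (\int[lebesgue_measure]_(x in `[0%R, 1%R]) ((psi^`()).[x] * psi.[1 - x])%:E
     = (1 / (kR + 1))%:E)%E.
Proof.
move=> k psi kR.
pose n := (2 * kappa)%N.
have hk : k = n.+1 by rewrite /k addn1.
have hn : (-1 : R) ^+ n = 1 by rewrite /n exprM sqrrN expr1n expr1n.
have [i1 [i2 [i3 [i4 [i5 i7]]]]] := @items R n hn.
have [_ [_ [d0 d1]]] := @psi_vals R n hn.
have hA := @A_val R n; have hB := @B_val R n hn; have hc := @cn R n.
have hpsi : psi = psi_poly R n.+1 by rewrite /psi hk.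
have hkR : kR = (n.+1)%:R by rewrite /kR hk.
rewrite hA hB hc in i1 i2 i3 i4 i5 i7.
rewrite -/n in hk.
have e2 : (n.+2)%:R = (n.+1)%:R + 1 :> R by rewrite (@natr1 R n.+1).
have e3 : (n.+3)%:R = (n.+1)%:R + 2 :> R by rewrite -(@natr1 R n.+2) e2; ring.
rewrite e2 e3 in i1 i2 i3 i4 i5 i7 d0 d1.
have hpos : 0 < (n.+1)%:R :> R by rewrite ltr0Sn.
rewrite hkR; move: hk; rewrite hpsi => hk.
set P := psi_poly R n.+1 in i1 i2 i3 i4 i5 i7 d0 d1 *.
set N := (n.+1)%:R in i1 i2 i3 i4 i5 i7 d0 d1 hpos *.
have omx : forall x : R, (1 - 'X : {poly R}).[x] = 1 - x by move=> x; rewrite !hornerE.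
have hn0 : (0 : R) <= n%:R by apply: ler0n.
have N0 : N != 0 by rewrite gt_eqF.
have N1 : N + 1 != 0 by rewrite gt_eqF //; lra.
have N2 : N + 2 != 0 by rewrite gt_eqF //; lra.
split.
  rewrite (_ : (fun x => (P.[x] ^+ 2)%:E) = (fun x => ((P * P).[x])%:E)).
    by rewrite int_poly i1; congr (_%:E); field; sidec.
  by apply/funext => x; rewrite hornerM expr2.
split.
  rewrite (_ : (fun x => (P.[x] * P.[1 - x])%:E) = (fun x => (((P \Po (1 - 'X)) * P).[x])%:E)).
    by rewrite int_poly i2; congr (_%:E); field; sidec.
  by apply/funext => x; rewrite hornerM horner_comp omx mulrC.
split.
  move=> j hj.
  rewrite (_ : (fun x => (x ^+ j * P.[x])%:E) = (fun x => (('X^j * P).[x])%:E)).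
    by rewrite int_poly i3; [congr (_%:E); field; sidec | rewrite -hk].
  by apply/funext => x; rewrite hornerM hornerXn.
split.
  by rewrite int_poly i4; congr (_%:E); field; sidec.
split.
  move=> j hj.
  rewrite (_ : (fun x => ((1 - x) ^+ j * P.[x])%:E) = (fun x => (((1 - 'X)^+j * P).[x])%:E)).
    by rewrite int_poly i5; [congr (_%:E); field; sidec | rewrite -hk].
  by apply/funext => x; rewrite hornerM horner_exp omx.
split.
  by rewrite d0 d1; split; field.
rewrite (_ : (fun x => (P^`().[x] * P.[1 - x])%:E) = (fun x => (((P \Po (1 - 'X)) * P^`()).[x])%:E)).
  by rewrite int_poly i7 d0 d1; congr (_%:E); field; sidec.
by apply/funext => x; rewrite hornerM horner_comp omx mulrC.
Qed.
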